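(* Let $n \ge 4$ be an even integer, let $m = \frac{n-2}{2}$, and let $G_n$ be the $n$-vertex graph obtained from two disjoint cliques $Q_1, Q_2$, each isomorphic to $K_m$, together with two non-adjacent vertices $u$ and $v$, each adjacent to every vertex of $Q_1 \cup Q_2$ (i.e., $G_n$ is the join of $2K_m$ with $2K_1$). Then $AT(G_n) = \frac{n}{2}$.
   Context: For a digraph $D$, an Eulerian subdigraph is a spanning subdigraph $F$ with $d^+_F(v) = d^-_F(v)$ for every vertex $v$; it is even or odd according to the parity of its number of edges. The Alon--Tarsi number $AT(G)$ is the minimum $k$ such that there is an orientation $D$ of $G$ in which every vertex has outdegree less than $k$ and the number of even Eulerian subdigraphs of $D$ differs from the number of odd Eulerian subdigraphs. *)

(* Defs.v *)
From mathcomp Require Import all_boot.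
Set Implicit Arguments. Unset Strict Implicit. Unset Printing Implicit Defensive.

Definition simple_graph (T : finType) (g : rel T) : Prop :=
  (forall x, ~~ g x x) /\ (forall x y, g x y = g y x).

Definition orientation (T : finType) (g : rel T) (D : rel T) : Prop :=
  (forall x y, D x y -> g x y) /\
  (forall x y, g x y -> (D x y (+) D y x)).

Definition outdeg (T : finType) (D : rel T) (x : T) : nat := #|[set y | D x y]|.

Definition arcs (T : finType) (D : rel T) : {set T * T} :=
  [set a | D a.1 a.2].

Definition eulerian_sub (T : finType) (D : rel T) (F : {set T * T}) : bool :=
  (F \subset arcs D) &&
  [forall v, #|[set a in F | a.1 == v]| == #|[set a in F | a.2 == v]|].

Definition num_even_eulerian (T : finType) (D : rel T) : nat :=
  #|[set F : {set T * T} | eulerian_sub D F & ~~ odd #|F|]|.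

Definition num_odd_eulerian (T : finType) (D : rel T) : nat :=
  #|[set F : {set T * T} | eulerian_sub D F & odd #|F|]|.

Definition AT_admissible (T : finType) (g : rel T) (k : nat) : Prop :=
  exists D : rel T, orientation g D /\
    (forall x, outdeg D x < k) /\
    num_even_eulerian D <> num_odd_eulerian D.

Definition AT_number_is (T : finType) (g : rel T) (k : nat) : Prop :=
  AT_admissible g k /\ (forall k', AT_admissible g k' -> k <= k').

(* The graph G_n on vertex set 'I_n, with m = (n-2)/2:
   Q1 = {0,..,m-1}, Q2 = {m,..,2m-1}, u = 2m, v = 2m+1. *)
Definition Gn_part (n : nat) (i : 'I_n) : nat :=
  let m := (n - 2) %/ 2 in
  if i < m then 0 else if i < 2 * m then 1 else 2.

Definition Gn (n : nat) : rel 'I_n := fun i j =>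
  (i != j) &&
  [|| (Gn_part i == 0) && (Gn_part j == 0),
      (Gn_part i == 1) && (Gn_part j == 1),
      (Gn_part i == 2) && (Gn_part j != 2) |
      (Gn_part i != 2) && (Gn_part j == 2)].

(* Main.v *)
Require Import Defs.
From mathcomp Require Import all_boot all_order all_algebra.
From mathcomp Require Import zify ring.
Set Implicit Arguments. Unset Strict Implicit. Unset Printing Implicit Defensive.
Import Order.TTheory GRing.Theory Num.Theory.

Section RingPart.
Local Open Scope ring_scope.


Definition S1 (d j : nat) : int :=
  \sum_(t < d.+1) (-1)^+t * ('C(d,t))%:R * ((t:nat)%:R)^+j.

Lemma S1_0 d : S1 d 0 = (d == 0%N)%:R.
Proof.
rewrite -expr0n -[0 in RHS](addNr 1) exprD1n /S1.
by apply: eq_bigr => i _; rewrite expr0 mulr1 mulr_natr.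
Qed.

Lemma S1_step d j : S1 d.+1 j.+1 =
  - (d.+1)%:R * \sum_(i < j.+1) ('C(j,i))%:R * S1 d i.
Proof.
rewrite /S1 big_ord_recl /= expr0n /= mulr0 add0r.
rewrite [RHS]mulr_sumr.
under [RHS]eq_bigr => i _ do rewrite mulrA mulr_sumr.
rewrite [RHS]exchange_big /=.
apply: eq_bigr => s _.
rewrite /bump leq0n add1n.
have e : ((s.+1)%:R : int)^+j = \sum_(i < j.+1) ((s:nat)%:R)^+i *+ 'C(j,i).
  by rewrite -exprD1n natr1.
have key : ('C(d.+1, s.+1) * s.+1 = d.+1 * 'C(d,s))%N.
  by rewrite mulnC -mul_bin_diag.
rewrite [_%:R ^+ j.+1]exprS e mulr_sumr mulr_sumr.
apply: eq_bigr => i _.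
rewrite -mulr_natr.
transitivity ((-1) ^+ s.+1 * (('C(d.+1, s.+1) * s.+1)%N%:R) * (s%:R ^+ i * 'C(j, i)%:R) :> int).
  rewrite natrM -natr1; ring.
rewrite key natrM exprS; ring.
Qed.

Lemma S1_val j : forall i d, (i <= j)%N -> (i <= d)%N ->
  S1 d i = if i == d then (-1)^+d * (d`!)%:R else 0.
Proof.
elim: j => [|j IH] i d.
  rewrite leqn0 => /eqP -> _; rewrite S1_0.
  by case: d => [|d] //=; rewrite expr0 mul1r.
rewrite leq_eqVlt ltnS => /orP [/eqP -> | ij] id; last exact: IH.
case: d id => [//|d] id.
rewrite S1_step.
have H : forall i', (i' < j.+1)%N -> S1 d i' = if i' == d then (-1)^+d * (d`!)%:R else 0.
  move=> i' hi'; apply: IH; lia.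
under eq_bigr => i' _ do rewrite H //.
have [jd|jd] := eqVneq j d.
  subst j; rewrite big_ord_recr /= eqxx big1 ?add0r; last first.
    by move=> i' _; rewrite (ltn_eqF (ltn_ord i')) mulr0.
  rewrite eqxx binn mul1r factS natrM exprS; ring.
rewrite big1; last first.
  move=> i' _; case: eqP => [e|]; last by rewrite mulr0.
  have := ltn_ord i'; rewrite e => hd; exfalso.
  move/eqP: jd; apply; lia.
by rewrite mulr0 eqSS (negbTE jd).
Qed.

Lemma S1_lt i d : (i < d)%N -> S1 d i = 0.
Proof. by move=> h; rewrite (@S1_val i) // ?(ltnW h) // (ltn_eqF h). Qed.

Lemma S1_nz d : S1 d d != 0.
Proof.
rewrite (@S1_val d) // eqxx mulf_eq0 negb_or signr_eq0 /=.
by rewrite pnatr_eq0 -lt0n fact_gt0.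
Qed.


Lemma M_S1 N d j : (d < N)%N ->
  \sum_(t < N) (-1)^+t * ('C(d,t))%:R * (((t:nat)%:R : int))^+j = S1 d j.
Proof.
move=> dN; rewrite /S1 (big_ord_widen N (fun t : nat => (-1)^+t * ('C(d,t))%:R * ((t%:R : int))^+j) dN).
rewrite [RHS]big_mkcond; apply: eq_bigr => t _.
by case: ltnP => // h; rewrite bin_small // mulr0 mul0r.
Qed.

Section Lower.
Variables (T : finType) (D : rel T).

Definition outs (J : {set T * T}) (x : T) := #|[set a in J | a.1 == x]|.
Definition ins (J : {set T * T}) (x : T) := #|[set a in J | a.2 == x]|.
Definition pi_ (J : {set T * T}) (a : T * T) := if a \in J then a.2 else a.1.
Definition chi (J : {set T * T}) (a : T * T) : nat := (a \in J) || D a.1 a.2.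
Definition kk (J : {set T * T}) (x : T) : nat := (\sum_(a | pi_ J a == x) chi J a)%N.

Lemma cardS_sum (J : {set T * T}) (P : pred (T * T)) :
  #|[set a in J | P a]| = (\sum_a ((a \in J) && P a : nat))%N.
Proof.
rewrite -sum1_card big_mkcond; apply: eq_bigr => a _; rewrite inE.
by case: (_ && _).
Qed.

Lemma outdeg_sum x : outdeg D x = (\sum_(a : T * T) (D a.1 a.2 && (a.1 == x) : nat))%N.
Proof.
rewrite /outdeg -sum1_card big_mkcond /= -(pair_bigA _ (fun i j => (D i j && (i == x) : nat))) /=.
rewrite [RHS](bigD1 x) //= [X in (_ + X)%N]big1 ?addn0; last first.
  move=> i /negbTE ix; apply: big1 => j _; by rewrite ix andbF.
apply: eq_bigr => j _; rewrite inE eqxx andbT; by case: (D x j).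
Qed.

Lemma key_k (J : {set T * T}) x : J \subset [set a | D a.1 a.2] ->
  (kk J x + outs J x = outdeg D x + ins J x)%N.
Proof.
move=> /subsetP sJ.
rewrite /kk /outs /ins !cardS_sum outdeg_sum.
rewrite (big_mkcond (fun a => pi_ J a == x)) -!big_split /=.
apply: eq_bigr => a _; rewrite /pi_ /chi.
case aJ: (a \in J) => /=.
  have := sJ a aJ; rewrite inE => -> /=.
  by case: (a.2 == x); case: (a.1 == x).
by case: (a.1 == x); case: (D a.1 a.2); rewrite ?andbF ?andbT.
Qed.

Lemma sum_k (J : {set T * T}) : J \subset [set a | D a.1 a.2] ->
  (\sum_x kk J x = \sum_x outdeg D x)%N.
Proof.
move=> /subsetP sJ.
rewrite /kk.
under [RHS]eq_bigr => x _ do rewrite outdeg_sum.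
rewrite [LHS](exchange_big_dep predT) //= [RHS]exchange_big /=.
apply: eq_bigr => a _.
rewrite (big_pred1 (pi_ J a)); last by move=> x; rewrite eq_sym.
rewrite (bigD1 a.1) //= eqxx andbT big1 ?addn0; last first.
  by move=> x /negbTE h; rewrite eq_sym h andbF.
rewrite /chi; case aJ: (a \in J) => //=.
by have := sJ a aJ; rewrite inE => ->.
Qed.


Variable N : nat.

Definition Pc (c : {ffun T -> 'I_N}) : int :=
  \prod_(a : T * T) (if D a.1 a.2 then ((c a.1 : nat)%:R - (c a.2 : nat)%:R) else 1).

Definition term (c : {ffun T -> 'I_N}) (J : {set T * T}) : int :=
  \prod_(a : T * T) (if a \in J then (if D a.1 a.2 then - (c a.2 : nat)%:R else 0)
                    else (if D a.1 a.2 then (c a.1 : nat)%:R else 1)).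

Lemma Pc_expand c : Pc c = \sum_(J : {set T * T}) term c J.
Proof.
rewrite /Pc /term.
transitivity (\prod_(a : T * T) ((if D a.1 a.2 then - (c a.2 : nat)%:R else 0) +
                    (if D a.1 a.2 then (c a.1 : nat)%:R else 1)) : int).
  apply: eq_bigr => a _; case: (D a.1 a.2); rewrite ?add0r //.
  by rewrite addrC.
by rewrite bigA_distr.
Qed.

Lemma term_notsub c (J : {set T * T}) : ~~ (J \subset [set a | D a.1 a.2]) -> term c J = 0.
Proof.
case/subsetPn => a aJ; rewrite inE => /negbTE na.
by rewrite /term (bigD1 a) //= aJ na mul0r.
Qed.

Lemma term_sub c (J : {set T * T}) : J \subset [set a | D a.1 a.2] ->
  term c J = (-1)^+#|J| * \prod_x ((c x : nat)%:R)^+(kk J x).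
Proof.
move=> /subsetP sJ; rewrite /term.
transitivity (\prod_(a : T * T) ((-1)^+(a \in J) * ((c (pi_ J a) : nat)%:R)^+(chi J a)) : int).
  apply: eq_bigr => a _; rewrite /pi_ /chi.
  case aJ: (a \in J) => /=.
    by have := sJ a aJ; rewrite inE => ->; rewrite expr1 mulN1r expr1.
  by case: (D a.1 a.2); rewrite /= ?expr0 ?expr1 ?mul1r.
rewrite big_split /=; congr (_ * _).
  rewrite -prodr_const [RHS]big_mkcond; apply: eq_bigr => a _.
  by case: (a \in J).
rewrite (partition_big (pi_ J) predT) //=.
apply: eq_bigr => x _.
rewrite -prodrXr; apply: eq_bigr => a /eqP <-.
done.
Qed.


Definition Wt (c : {ffun T -> 'I_N}) : int :=
  \prod_x ((-1)^+(c x : nat) * ('C(outdeg D x, c x))%:R).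

Definition Cst : int := \prod_x S1 (outdeg D x) (outdeg D x).

Lemma sum_term (hN : forall x, (outdeg D x < N)%N) (J : {set T * T}) :
  \sum_c Wt c * term c J = if eulerian_sub D J then (-1)^+#|J| * Cst else 0.
Proof.
rewrite /eulerian_sub /arcs.
case sJ: (J \subset [set a | D a.1 a.2]); last first.
  by apply: big1 => c _; rewrite term_notsub ?sJ // mulr0.
under eq_bigr => c _ do rewrite term_sub // mulrCA /Wt -big_split /=.
rewrite -mulr_sumr.
rewrite -(bigA_distr_bigA (fun x (t : 'I_N) => (-1) ^+ t * 'C(outdeg D x, t)%:R * (t%:R)^+(kk J x))) /=.
under eq_bigr => x _ do rewrite M_S1 //.
case: forallP => /= [eul | neul].
  rewrite /Cst; congr (_ * _); apply: eq_bigr => x _.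
  have := key_k x sJ; have := eqP (eul x); rewrite /outs /ins => ->.
  by move=> h; rewrite (addIn h).
have [x hx] : exists x, (kk J x < outdeg D x)%N.
  apply/existsP; apply: contraT; rewrite negb_exists => /forallP hge.
  have hge' : forall x, (outdeg D x <= kk J x)%N by move=> x; rewrite leqNgt; exact: hge.
  case: neul => x; apply/eqP.
  have e := key_k x sJ.
  have : kk J x = outdeg D x.
    apply/eqP; rewrite eqn_leq hge' andbT; apply: contraT; rewrite -ltnNge => hlt.
    have hs := sum_k sJ; rewrite (bigD1 x) //= [X in _ = X](bigD1 x) //= in hs.
    have hl : (\sum_(i | i != x) outdeg D i <= \sum_(i | i != x) kk J i)%N.
      by apply: leq_sum => i _; exact: hge' i.
    move: hs hl.
    set A := (\sum_(i | i != x) outdeg D i)%N.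
    set B := (\sum_(i | i != x) kk J i)%N.
    move=> hs hl; clearbody A B; clear -hs hl hlt; suff : False by []; lia.
  by move=> hk; rewrite hk in e; exact: (addnI e).
by rewrite (bigD1 x) //= S1_lt // mul0r mulr0.
Qed.

Lemma lower_main (hN : forall x, (outdeg D x < N)%N)
  (hP : forall c : {ffun T -> 'I_N}, exists x y, D x y /\ c x = c y) :
  num_even_eulerian D = num_odd_eulerian D.
Proof.
have H0 : \sum_c Wt c * Pc c = 0.
  apply: big1 => c _; have [x [y [dxy cxy]]] := hP c.
  by rewrite /Pc (bigD1 (x, y)) //= dxy cxy subrr mul0r mulr0.
have H1 : \sum_c Wt c * Pc c = \sum_(J | eulerian_sub D J) (-1)^+#|J| * Cst.
  under eq_bigr => c _ do rewrite Pc_expand mulr_sumr.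
  rewrite exchange_big /= [RHS]big_mkcond; apply: eq_bigr => J _; exact: sum_term.
have H2 : \sum_(J | eulerian_sub D J) (-1)^+#|J| =
   (num_even_eulerian D)%:R - (num_odd_eulerian D)%:R :> int.
  rewrite (bigID (fun J : {set T * T} => odd #|J|)) /= addrC.
  under eq_bigr => J /andP [_ oJ] do rewrite -signr_odd (negbTE oJ) expr0.
  under [X in _ + X]eq_bigr => J /andP [_ oJ] do rewrite -signr_odd oJ expr1.
  rewrite sumr_const sumr_const /num_even_eulerian /num_odd_eulerian.
  rewrite mulNrn; congr (_%:R - _%:R).
    by apply: eq_card => J; rewrite !inE.
  by apply: eq_card => J; rewrite !inE.
have H3 : Cst * ((num_even_eulerian D)%:R - (num_odd_eulerian D)%:R) = 0 :> int.
  rewrite -H2 mulr_sumr -[RHS]H0 H1; apply: eq_bigr => J _; by rewrite mulrC.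
have Cnz : Cst != 0.
  by apply/prodf_neq0 => x _; exact: S1_nz.
move/eqP: H3; rewrite mulf_eq0 (negbTE Cnz) /= subr_eq0 => /eqP.
by move/eqP; rewrite eqr_nat => /eqP.
Qed.

End Lower.


Lemma sum_sign_eul (T : finType) (D : rel T) :
  \sum_(J | eulerian_sub D J) (-1)^+#|J| =
   (num_even_eulerian D)%:R - (num_odd_eulerian D)%:R :> int.
Proof.
rewrite (bigID (fun J : {set T * T} => odd #|J|)) /= addrC.
under eq_bigr => J /andP [_ oJ] do rewrite -signr_odd (negbTE oJ) expr0.
under [X in _ + X]eq_bigr => J /andP [_ oJ] do rewrite -signr_odd oJ expr1.
rewrite sumr_const sumr_const /num_even_eulerian /num_odd_eulerian.
rewrite mulNrn; congr (_%:R - _%:R).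
  by apply: eq_card => J; rewrite !inE.
by apply: eq_card => J; rewrite !inE.
Qed.

Section Upper.
Variables (T : finType) (D : rel T) (phi : T -> T) (Q1 : pred T) (u v : T) (r : T -> nat).
Hypothesis phiK : involutive phi.
Hypothesis phiD : forall x y, D (phi x) (phi y) = D x y.
Hypothesis phiu : phi u = v.
Hypothesis Q1phi : forall x, Q1 x -> ~~ Q1 (phi x).
Hypothesis Q1u : ~~ Q1 u.
Hypothesis Q1v : ~~ Q1 v.
Hypothesis uv : u != v.
Definition A1 x y := [|| (x == u) && Q1 y, Q1 x && Q1 y | Q1 x && (y == v)].
Hypothesis hD : forall x y, D x y -> A1 x y || A1 (phi x) (phi y).
Hypothesis hr : forall x y, D x y -> A1 x y -> (r y < r x)%N.

Lemma phiv : phi v = u.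
Proof. by rewrite -phiu phiK. Qed.

Definition Phi (a : T * T) := (phi a.1, phi a.2).
Lemma PhiK : involutive Phi.
Proof. by case=> x y; rewrite /Phi /= !phiK. Qed.
Lemma Phi_inj : injective Phi.
Proof. exact: can_inj PhiK. Qed.

Lemma memPhi (G : {set T * T}) a : (a \in Phi @: G) = (Phi a \in G).
Proof.
apply/imsetP/idP => [[b bG ->]|h]; first by rewrite PhiK.
by exists (Phi a); rewrite ?PhiK.
Qed.

Definition A1s := [set a | D a.1 a.2 && A1 a.1 a.2].

Lemma A1_src x y : A1 x y -> (x == u) || Q1 x.
Proof. by rewrite /A1 => /or3P [/andP [->]|/andP [->]|/andP [->]] //; rewrite orbT. Qed.
Lemma A1_dst x y : A1 x y -> (y == v) || Q1 y.
Proof. by rewrite /A1 => /or3P [/andP [_ ->]|/andP [_ ->]|/andP [_ ->]] //; rewrite orbT. Qed.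

Lemma A1_disj x y : A1 x y -> ~~ A1 (phi x) (phi y).
Proof.
move=> /A1_src h; apply/negP => /A1_src.
case/orP: h => [/eqP -> | qx].
  by rewrite phiu (negbTE Q1v) orbF eq_sym (negbTE uv).
case/orP => [/eqP e | ]; last by rewrite (negbTE (Q1phi qx)).
by move: qx; rewrite -(phiK x) e phiu (negbTE Q1v).
Qed.

Lemma outs_Phi (G : {set T * T}) x : outs (Phi @: G) x = outs G (phi x).
Proof.
rewrite /outs -(card_imset _ Phi_inj); apply: eq_card => a.
rewrite memPhi !inE memPhi /Phi /=.
case: a => a1 a2 /=; rewrite !phiK; congr (_ && _).
by apply/eqP/eqP => [<-|->]; rewrite ?phiK.
Qed.

Lemma ins_Phi (G : {set T * T}) x : ins (Phi @: G) x = ins G (phi x).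
Proof.
rewrite /ins -(card_imset _ Phi_inj); apply: eq_card => a.
rewrite memPhi !inE memPhi /Phi /=.
case: a => a1 a2 /=; rewrite !phiK; congr (_ && _).
by apply/eqP/eqP => [<-|->]; rewrite ?phiK.
Qed.

Lemma outs0 (F : {set T * T}) x : F \subset A1s -> ~~ Q1 x -> x != u -> outs F x = 0%N.
Proof.
move=> /subsetP sF qx xu; apply/eqP; rewrite cards_eq0; apply/eqP/setP => a.
rewrite !inE; apply/negbTE/andP => [[aF /eqP ax]].
have := sF a aF; rewrite inE => /andP [_ /A1_src]; rewrite ax (negbTE qx) (negbTE xu).
done.
Qed.

Lemma ins0 (F : {set T * T}) x : F \subset A1s -> ~~ Q1 x -> x != v -> ins F x = 0%N.
Proof.
move=> /subsetP sF qx xv; apply/eqP; rewrite cards_eq0; apply/eqP/setP => a.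
rewrite !inE; apply/negbTE/andP => [[aF /eqP ax]].
have := sF a aF; rewrite inE => /andP [_ /A1_dst]; rewrite ax (negbTE qx) (negbTE xv).
done.
Qed.

Lemma wsum_outs (f : T -> nat) (F : {set T * T}) :
  (\sum_(a in F) f a.1 = \sum_x f x * outs F x)%N.
Proof.
rewrite (partition_big (fun a => a.1) predT) //=; apply: eq_bigr => x _.
rewrite (eq_bigr (fun _ => f x)); last by move=> a /andP [_ /eqP ->].
rewrite sum_nat_const mulnC /outs; congr (_ * _)%N.
by apply: eq_card => a; rewrite !inE.
Qed.

Lemma wsum_ins (f : T -> nat) (F : {set T * T}) :
  (\sum_(a in F) f a.2 = \sum_x f x * ins F x)%N.
Proof.
rewrite (partition_big (fun a => a.2) predT) //=; apply: eq_bigr => x _.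
rewrite (eq_bigr (fun _ => f x)); last by move=> a /andP [_ /eqP ->].
rewrite sum_nat_const mulnC /ins; congr (_ * _)%N.
by apply: eq_card => a; rewrite !inE.
Qed.

Lemma eul_empty (F : {set T * T}) : (forall a, a \in F -> r a.2 < r a.1)%N ->
  (forall x, outs F x = ins F x) -> F = set0.
Proof.
move=> hF hb.
have e : (\sum_(a in F) r a.1 = \sum_(a in F) r a.2)%N.
  by rewrite wsum_outs wsum_ins; apply: eq_bigr => x _; rewrite hb.
case: (set_0Vmem F) => [//|[a0 a0F]]; exfalso.
move: e; rewrite (bigD1 a0) //= [X in _ = X](bigD1 a0) //=.
have hl : (\sum_(a in F | a != a0) r a.2 <= \sum_(a in F | a != a0) r a.1)%N.
  by apply: leq_sum => a /andP [aF _]; apply: ltnW; exact: hF.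
have := hF a0 a0F.
move: hl.
set X := (\sum_(a in F | a != a0) r a.2)%N.
set Y := (\sum_(a in F | a != a0) r a.1)%N.
move=> hl h1 h2; clearbody X Y; lia.
Qed.


Lemma phi_eq_u x : (phi x == u) = (x == v).
Proof. by apply/eqP/eqP => [e|->]; [rewrite -(phiK x) e phiu | exact: phiv]. Qed.
Lemma phi_eq_v x : (phi x == v) = (x == u).
Proof. by apply/eqP/eqP => [e|->]; [rewrite -(phiK x) e phiv | exact: phiu]. Qed.

Lemma sum3 (f : T -> nat) :
  (\sum_x f x = f u + f v + \sum_(x | (x != u) && (x != v)) f x)%N.
Proof.
rewrite (bigD1 u) //= (bigD1 v) /=; first by rewrite addnA.
by rewrite eq_sym uv.
Qed.

Definition balQ (F : {set T * T}) := [forall x, Q1 x ==> (outs F x == ins F x)].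

Lemma sum_outs_ins (F : {set T * T}) : (\sum_x outs F x = \sum_x ins F x)%N.
Proof.
have h1 := wsum_outs (fun _ => 1%N) F; have h2 := wsum_ins (fun _ => 1%N) F.
rewrite -(eq_bigr _ (fun x _ => mul1n (outs F x))) -(eq_bigr _ (fun x _ => mul1n (ins F x))).
by rewrite -h1 -h2.
Qed.

Lemma conserv (F : {set T * T}) : F \subset A1s -> balQ F -> outs F u = ins F v.
Proof.
move=> sF /forallP bF.
have e := sum_outs_ins F; rewrite !sum3 in e.
have E2 : (\sum_(x | (x != u) && (x != v)) outs F x = \sum_(x | (x != u) && (x != v)) ins F x)%N.
  apply: eq_bigr => x /andP [xu xv].
  case: (boolP (Q1 x)) => qx; first by apply/eqP; exact: (implyP (bF x)).
  by rewrite outs0 // ins0.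
rewrite E2 in e.
rewrite (@ins0 F u) // (@outs0 F v) // ?(eq_sym v) // in e.
lia.
Qed.

Lemma key0 (F : {set T * T}) : F \subset A1s -> balQ F -> outs F u = 0%N -> F = set0.
Proof.
move=> sF bF k0; have cv := conserv sF bF.
move/forallP: bF => bF.
apply: (@eul_empty F).
  move=> a aF; have := subsetP sF a aF; rewrite inE => /andP [da aa]; exact: hr.
move=> x; case: (boolP (Q1 x)) => qx; first by apply/eqP; exact: (implyP (bF x)).
have [->|xu] := eqVneq x u; first by rewrite k0 ins0.
have [->|xv] := eqVneq x v; first by rewrite -cv k0 outs0 // eq_sym.
by rewrite outs0 // ins0.
Qed.

Lemma notboth a : a \in A1s -> (a \in Phi @: A1s) = false.
Proof.
rewrite memPhi !inE => /andP [_ h]; apply/negbTE; rewrite negb_and.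
by rewrite (A1_disj h) orbT.
Qed.

Lemma outsU (F1 F2 : {set T * T}) x : [disjoint F1 & F2] ->
  outs (F1 :|: F2) x = (outs F1 x + outs F2 x)%N.
Proof.
move=> dj; rewrite /outs !cardS_sum -big_split /=; apply: eq_bigr => a _.
rewrite inE; case: (boolP (a \in F1)) => a1 /=.
  by rewrite (disjointFr dj a1) /= addn0.
by case: (a \in F2).
Qed.

Lemma insU (F1 F2 : {set T * T}) x : [disjoint F1 & F2] ->
  ins (F1 :|: F2) x = (ins F1 x + ins F2 x)%N.
Proof.
move=> dj; rewrite /ins !cardS_sum -big_split /=; apply: eq_bigr => a _.
rewrite inE; case: (boolP (a \in F1)) => a1 /=.
  by rewrite (disjointFr dj a1) /= addn0.
by case: (a \in F2).
Qed.

Lemma disjP (F1 G : {set T * T}) : F1 \subset A1s -> G \subset A1s ->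
  [disjoint F1 & Phi @: G].
Proof.
move=> s1 s2; rewrite disjoint_subset; apply/subsetP => a aF.
rewrite inE memPhi; apply/negP => aG.
have := notboth (subsetP s1 a aF); rewrite memPhi (subsetP s2 _ aG) //.
Qed.


Lemma Q1_neq_u x : Q1 x -> x != u.
Proof. by move=> qx; apply/eqP => e; move: qx; rewrite e (negbTE Q1u). Qed.
Lemma Q1_neq_v x : Q1 x -> x != v.
Proof. by move=> qx; apply/eqP => e; move: qx; rewrite e (negbTE Q1v). Qed.

Lemma eul_split (F1 G : {set T * T}) : F1 \subset A1s -> G \subset A1s ->
  eulerian_sub D (F1 :|: Phi @: G) = [&& balQ F1, balQ G & outs F1 u == outs G u].
Proof.
move=> s1 s2.
have dj := disjP s1 s2.
have sub : F1 :|: Phi @: G \subset arcs D.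
  apply/subsetP => a; rewrite inE => /orP [aF|aG].
    by have := subsetP s1 a aF; rewrite !inE => /andP [].
  rewrite memPhi in aG; have := subsetP s2 _ aG; rewrite !inE /Phi /= phiD.
  by case/andP.
rewrite /eulerian_sub sub /=.
transitivity [forall x, (outs F1 x + outs G (phi x) == ins F1 x + ins G (phi x))%N].
  apply: eq_forallb => x.
  by rewrite -[#|_|]/(outs _ x) -[#|[set a in _ | a.2 == x]|]/(ins _ x) outsU // insU // outs_Phi ins_Phi.
apply/forallP/and3P => [h|[/forallP b1 /forallP b2 /eqP k] x].
  have hQ1 : forall x, Q1 x -> outs F1 x = ins F1 x.
    move=> x qx; have := h x.
    rewrite (outs0 s2 (Q1phi qx)) ?phi_eq_u ?(Q1_neq_v qx) //.
    rewrite (ins0 s2 (Q1phi qx)) ?phi_eq_v ?(Q1_neq_u qx) //.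
    by rewrite !addn0 => /eqP.
  have hQ2 : forall y, Q1 y -> outs G y = ins G y.
    move=> y qy; have := h (phi y); rewrite phiK.
    rewrite (outs0 s1 (Q1phi qy)) ?phi_eq_u ?(Q1_neq_v qy) //.
    rewrite (ins0 s1 (Q1phi qy)) ?phi_eq_v ?(Q1_neq_u qy) //.
    by rewrite !add0n => /eqP.
  have bG : balQ G by apply/forallP => y; apply/implyP => qy; rewrite hQ2.
  split.
  - by apply/forallP => y; apply/implyP => qy; rewrite hQ1.
  - exact: bG.
  - have := h u; rewrite phiu (outs0 s2 Q1v) ?(eq_sym v) // (ins0 s1 Q1u) //.
    by rewrite addn0 add0n (conserv s2 bG).
have cv1 := conserv s1 (introT forallP b1).
have cv2 := conserv s2 (introT forallP b2).
case: (boolP (Q1 x)) => qx.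
  rewrite (outs0 s2 (Q1phi qx)) ?phi_eq_u ?(Q1_neq_v qx) //.
  rewrite (ins0 s2 (Q1phi qx)) ?phi_eq_v ?(Q1_neq_u qx) //.
  by rewrite !addn0; exact: (implyP (b1 x)).
case: (boolP (Q1 (phi x))) => qpx.
  rewrite (outs0 s1 qx) ?(Q1_neq_u (Q1phi qpx)) ?phiK //; last first.
    by apply/eqP => e; move: qpx; rewrite e phiu (negbTE Q1v).
  rewrite (ins0 s1 qx) //; last first.
    by apply/eqP => e; move: qpx; rewrite e phiv (negbTE Q1u).
  by rewrite !add0n; exact: (implyP (b2 _)).
have [->|xu] := eqVneq x u.
  rewrite phiu (outs0 s2 Q1v) ?(eq_sym v) // (ins0 s1 Q1u) //.
  by rewrite addn0 add0n k cv2.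
have [->|xv] := eqVneq x v.
  rewrite phiv (outs0 s1 Q1v) ?(eq_sym v) // (ins0 s2 Q1u) //.
  by rewrite addn0 add0n -cv1 k.
rewrite (outs0 s1 qx xu) (ins0 s1 qx xv) (outs0 s2 qpx) ?phi_eq_u //.
by rewrite (ins0 s2 qpx) ?phi_eq_v.
Qed.

Lemma card_split (F1 G : {set T * T}) : F1 \subset A1s -> G \subset A1s ->
  #|F1 :|: Phi @: G| = (#|F1| + #|G|)%N.
Proof.
move=> s1 s2; rewrite cardsU (card_imset _ Phi_inj).
have : F1 :&: Phi @: G = set0.
  by apply/eqP; rewrite setI_eq0; exact: disjP.
by move=> ->; rewrite cards0 subn0.
Qed.


Lemma decomp (g : {set T * T} -> int) :
  (forall F : {set T * T}, ~~ (F \subset A1s :|: Phi @: A1s) -> g F = 0) ->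
  \sum_F g F = \sum_(F1 : {set T * T} | F1 \subset A1s) \sum_(G : {set T * T} | G \subset A1s) g (F1 :|: Phi @: G).
Proof.
move=> hg.
rewrite (bigID (fun F : {set T * T} => F \subset A1s :|: Phi @: A1s)) /=.
rewrite [X in _ + X]big1 ?addr0; last by move=> F /hg.
rewrite pair_big /=.
rewrite (reindex_onto (fun p : {set T * T} * {set T * T} => p.1 :|: Phi @: p.2)
   (fun F => (F :&: A1s, Phi @: (F :&: Phi @: A1s)))) /=; last first.
  move=> F sF; apply/setP => a; rewrite !inE !memPhi PhiK !inE.
  case aF: (a \in F) => //=; have := subsetP sF a aF; rewrite !inE memPhi.
  done.
apply: eq_bigl => -[F1 G] /=.
case: (boolP ((F1 \subset A1s) && (G \subset A1s))) => [/andP [s1 s2]|ns].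
  rewrite setUSS ?imsetS //= xpair_eqE; apply/andP; split; apply/eqP/setP => a.
    rewrite in_setI in_setU memPhi; case aF: (a \in F1) => /=.
      by rewrite (subsetP s1 a aF).
    apply/negbTE/andP => [[pa aA]].
    by have := notboth aA; rewrite memPhi (subsetP s2 _ pa).
  rewrite memPhi in_setI in_setU !memPhi PhiK; case aG: (a \in G) => /=.
    by rewrite orbT (subsetP s2 a aG).
  rewrite orbF; apply/negbTE/andP => [[pa aA]].
  by have := notboth aA; rewrite memPhi (subsetP s1 _ pa).
apply/negbTE; apply: contra ns => /andP [_ /eqP [e1 e2]].
apply/andP; split; first by rewrite -e1 subsetIr.
rewrite -e2; apply/subsetP => a; rewrite memPhi in_setI memPhi PhiK.
by case/andP.
Qed.

Definition PP (F : {set T * T}) := (F \subset A1s) && balQ F.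
Definition gg (j : nat) : int := \sum_(G : {set T * T} | PP G && (outs G u == j)) (-1)^+#|G|.

Lemma gg0 : gg 0 = 1.
Proof.
rewrite /gg (big_pred1 set0) ?cards0 ?expr0 // => G /=.
apply/idP/idP => [/andP [/andP [sG bG] /eqP k]|/eqP ->].
  by rewrite (key0 sG bG k).
have o : forall (P : pred (T * T)), #|[set a in (set0 : {set T * T}) | P a]| = 0%N.
  move=> P; apply/eqP; rewrite cards_eq0; apply/eqP/setP => a.
  by rewrite !inE.
rewrite /PP sub0set /=; apply/andP; split; last by rewrite /outs o.
by apply/forallP => x; apply/implyP => _; rewrite /outs /ins !o.
Qed.


Theorem upper_main : num_even_eulerian D <> num_odd_eulerian D.
Proof.
move=> E.
have H := sum_sign_eul D; rewrite E subrr in H.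
have arcsub : forall F : {set T * T}, eulerian_sub D F -> F \subset A1s :|: Phi @: A1s.
  move=> F /andP [sF _]; apply: subset_trans sF _; apply/subsetP => a; rewrite inE => da.
  rewrite in_setU memPhi !inE /Phi /=; have := hD da; case/orP => h.
    by rewrite da h.
  by rewrite phiD da h orbT.
rewrite big_mkcond /= decomp in H; last first.
  by move=> F nF; case: ifP => // /arcsub; rewrite (negbTE nF).
have H2 : \sum_(F1 : {set T * T} | F1 \subset A1s) \sum_(G : {set T * T} | G \subset A1s)
    (if eulerian_sub D (F1 :|: Phi @: G) then (-1)^+#|F1 :|: Phi @: G| else 0)
   = \sum_(F1 : {set T * T} | PP F1) (-1)^+#|F1| * gg (outs F1 u).
  rewrite /PP big_mkcondr /=; apply: eq_bigr => F1 s1.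
  under eq_bigr => G s2 do rewrite eul_split // card_split // exprD.
  case: (boolP (balQ F1)) => b1 /=; last by apply: big1 => G _.
  rewrite /gg mulr_sumr.
  under [RHS]eq_bigl => G do rewrite /PP -andbA.
  rewrite [RHS]big_mkcondr /=; apply: eq_bigr => G s2.
  by rewrite eq_sym.
rewrite H2 in H.
pose K := #|{: T * T}|.+1.
have kK : forall F : {set T * T}, (outs F u < K)%N.
  by move=> F; rewrite ltnS /outs max_card.
rewrite (partition_big (fun F => (inord (outs F u) : 'I_K)) predT) //= in H.
have H3 : \sum_(j < K) gg j * gg j = 0.
  rewrite -[RHS]H; apply: eq_bigr => j _.
  rewrite (eq_bigl (fun F => PP F && (outs F u == j))); last first.
    move=> F /=; congr (_ && _); apply/eqP/eqP => [<-|->].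
      by rewrite inordK.
    by rewrite inord_val.
  rewrite mulr_suml; apply: eq_bigr => F /andP [_ /eqP ->].
  by rewrite mulrC.
move: H3; rewrite (bigD1 ord0) //= gg0 mul1r.
have : 0 <= \sum_(j < K | j != ord0) gg j * gg j.
  by apply: sumr_ge0 => j _; rewrite -expr2 sqr_ge0.
set X := \sum_(j < K | j != ord0) gg j * gg j.
move=> hX hE; clearbody X; lia.
Qed.

End Upper.

End RingPart.

Section Concrete.
Variable m : nat.
Hypothesis m1 : (0 < m)%N.

Notation N2 := (m.*2.+2).

Definition vu : 'I_N2 := inord m.*2.
Definition vv : 'I_N2 := inord m.*2.+1.
Definition phif (i : nat) : nat :=
  if i < m then i + m else if i < m.*2 then i - m else if i == m.*2 then m.*2.+1 else m.*2.
Definition phi0 (x : 'I_N2) : 'I_N2 := inord (phif x).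

Lemma val_vu : nat_of_ord vu = m.*2. Proof. rewrite inordK //; lia. Qed.
Lemma val_vv : nat_of_ord vv = m.*2.+1. Proof. rewrite inordK //; lia. Qed.

Lemma val_phi0 (x : 'I_N2) : nat_of_ord (phi0 x) = phif x.
Proof.
rewrite inordK //; have := ltn_ord x; rewrite /phif.
by repeat case: ifP; lia.
Qed.

Definition D0 : rel 'I_N2 := fun x y =>
  let i := nat_of_ord x in let j := nat_of_ord y in
  [|| [&& i < m, j < m & j < i],
      [&& m <= i, i < m.*2, m <= j, j < m.*2 & j < i],
      (i == m.*2) && (j < m),
      (i < m) && (j == m.*2.+1),
      [&& i == m.*2.+1, m <= j & j < m.*2] |
      [&& m <= i, i < m.*2 & j == m.*2]].

Definition Q10 (x : 'I_N2) := (nat_of_ord x < m).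
Definition r0 (x : 'I_N2) : nat :=
  if nat_of_ord x < m then (nat_of_ord x).+1 else if nat_of_ord x == m.*2 then m.+1 else 0.

Lemma eq_ord_val (x y : 'I_N2) : (x == y) = (nat_of_ord x == nat_of_ord y).
Proof. by []. Qed.

Lemma phiK0 : involutive phi0.
Proof.
move=> x; apply/eqP; rewrite eq_ord_val !val_phi0 /phif; have := ltn_ord x.
by repeat case: ifP; lia.
Qed.

Lemma phiD0 x y : D0 (phi0 x) (phi0 y) = D0 x y.
Proof.
rewrite /D0 !val_phi0 /phif; have := ltn_ord x; have := ltn_ord y.
by repeat case: ifP; move=> *; apply/idP/idP; lia.
Qed.

Lemma phiu0 : phi0 vu = vv.
Proof. apply/eqP; rewrite eq_ord_val val_phi0 val_vu val_vv /phif; by repeat case: ifP; lia. Qed.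

Lemma Q1phi0 x : Q10 x -> ~~ Q10 (phi0 x).
Proof. rewrite /Q10 val_phi0 /phif; by repeat case: ifP; lia. Qed.

Lemma Q1u0 : ~~ Q10 vu. Proof. rewrite /Q10 val_vu; lia. Qed.
Lemma Q1v0 : ~~ Q10 vv. Proof. rewrite /Q10 val_vv; lia. Qed.
Lemma uv0 : vu != vv. Proof. rewrite eq_ord_val val_vu val_vv; lia. Qed.

Lemma hD0 x y : D0 x y -> A1 Q10 vu vv x y || A1 Q10 vu vv (phi0 x) (phi0 y).
Proof.
rewrite /A1 /Q10 !eq_ord_val !val_phi0 val_vu val_vv /D0 /phif.
have := ltn_ord x; have := ltn_ord y.
by repeat case: ifP; move=> *; lia.
Qed.

Lemma hr0 x y : D0 x y -> A1 Q10 vu vv x y -> (r0 y < r0 x)%N.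
Proof.
rewrite /A1 /Q10 !eq_ord_val val_vu val_vv /D0 /r0.
have := ltn_ord x; have := ltn_ord y.
by repeat case: ifP; move=> *; lia.
Qed.

Lemma upper0 : num_even_eulerian D0 <> num_odd_eulerian D0.
Proof.
apply: (@upper_main _ D0 phi0 Q10 vu vv r0).
- exact: phiK0.
- exact: phiD0.
- exact: phiu0.
- exact: Q1phi0.
- exact: Q1u0.
- exact: Q1v0.
- exact: uv0.
- exact: hD0.
- exact: hr0.
Qed.


Lemma Gn_part0 (x : 'I_N2) :
  Gn_part x = if (nat_of_ord x < m)%N then 0%N else if (nat_of_ord x < m.*2)%N then 1%N else 2%N.
Proof.
rewrite /Gn_part /=.
have -> : ((m.*2.+2 - 2) %/ 2 = m)%N by lia.
by have -> : (2 * m = m.*2)%N by lia.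
Qed.

Lemma orient0 : orientation (@Gn N2) D0.
Proof.
split.
  move=> x y; rewrite /Gn !Gn_part0 eq_ord_val /D0.
  have := ltn_ord x; have := ltn_ord y.
  by repeat case: ifP; move=> *; lia.
move=> x y; rewrite /Gn !Gn_part0 eq_ord_val => hg.
have h1 : D0 x y || D0 y x.
  move: hg; rewrite /D0; have := ltn_ord x; have := ltn_ord y.
  by repeat case: ifP; move=> *; lia.
have h2 : ~~ (D0 x y && D0 y x).
  rewrite /D0; have := ltn_ord x; have := ltn_ord y.
  by repeat case: ifP; move=> *; lia.
by move: h1 h2; case: (D0 x y); case: (D0 y x).
Qed.

Lemma card_bound (P : {pred 'I_N2}) (s : seq nat) :
  (forall y, y \in P -> nat_of_ord y \in s) -> (#|P| <= size s)%N.
Proof.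
move=> hs; rewrite cardE -(size_map (@nat_of_ord N2)); apply: uniq_leq_size.
  by rewrite map_inj_uniq ?enum_uniq //; exact: val_inj.
by move=> j /mapP [y]; rewrite mem_enum => Py ->; exact: hs.
Qed.

Lemma outdeg0 x : (outdeg D0 x < m.+1)%N.
Proof.
rewrite /outdeg ltnS.
pose s := if (nat_of_ord x < m)%N then m.*2.+1 :: iota 0 x
  else if (nat_of_ord x < m.*2)%N then m.*2 :: iota m (x - m)
  else if nat_of_ord x == m.*2 then iota 0 m else iota m m.
apply: leq_trans (@card_bound _ s _) _.
  move=> y; rewrite inE /D0 /s; have := ltn_ord x; have := ltn_ord y.
  by repeat case: ifP; move=> *; rewrite ?in_cons ?mem_iota; lia.
rewrite /s; have := ltn_ord x.
by repeat case: ifP; move=> *; rewrite /= ?size_iota; lia.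
Qed.

Lemma pigeon (c : 'I_N2 -> 'I_m) : exists x y, @Gn N2 x y /\ c x = c y.
Proof.
pose g (i : 'I_m.+1) : 'I_N2 := if (nat_of_ord i < m)%N then inord i else vu.
have gv : forall i, nat_of_ord (g i) = if (nat_of_ord i < m)%N then nat_of_ord i else m.*2.
  move=> i; rewrite /g; case: ifP => h; last exact: val_vu.
  by rewrite inordK //; lia.
pose h := fun i => c (g i).
have : ~~ injectiveb h.
  apply/negP => /injectiveP hi; have := @leq_card _ _ h hi; rewrite !card_ord; lia.
case/injectivePn => i [j] ij hij.
exists (g i), (g j); split => //.
have ij2 : (nat_of_ord i != nat_of_ord j) by []. clear hij. move: ij2; rewrite /Gn !Gn_part0 !eq_ord_val !gv.
have := ltn_ord i; have := ltn_ord j.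
by repeat case: ifP; move=> *; lia.
Qed.

End Concrete.

Theorem theorem2_aux (n : nat) :
  (4 <= n)%N -> ~~ odd n -> AT_number_is (@Gn n) (n %/ 2).
Proof.
move=> n4 ev.
have [m em] : exists m, n = m.*2.+2 by exists (n./2.-1); lia.
subst n.
have m1 : (0 < m)%N by lia.
have -> : (m.*2.+2 %/ 2 = m.+1)%N by lia.
split.
  exists (@D0 m); split; first exact: orient0.
  split; first exact: outdeg0.
  exact: upper0.
move=> k [D [[hD1 hD2] [hdeg hne]]].
rewrite leqNgt; apply/negP => hk.
apply: hne; apply: (@lower_main _ D m).
  by move=> x; apply: leq_trans (hdeg x) _; lia.
move=> c; have [x [y [g cxy]]] := pigeon m1 (fun z => c z).
have := hD2 x y g; case Dxy: (D x y) => /= h.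
  by exists x, y.
by exists y, x.
Qed.

Theorem theorem2 (n : nat) :
  4 <= n -> ~~ odd n -> AT_number_is (@Gn n) (n %/ 2).
Proof. exact: theorem2_aux. Qed.
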